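(* Let $p$ be a prime and let $a,b$ be integers with $0<a,b<p$. The following are equivalent: (1) $S^G_{a,b}$ is generated by 4 invariants, i.e. $|\mathrm{inv}_{a,b}|=4$ (equivalently, $\operatorname{codim}\ker\varphi_{a,b}=2$); (2) $\bigl(p-(a^{-1}b)_p\bigr)\bigl(p-(ab^{-1})_p\bigr)=p+1$.
   Context: Let $S=\mathbb{C}[x_1,x_2]$ with its standard grading, $\zeta=e^{2\pi i/p}$ and $G=\mathbb{Z}/p\mathbb{Z}=\langle\zeta\rangle$. For integers $a,b$, $G$ acts on $S$ by the $\mathbb{C}$-algebra automorphisms determined by $x_1\mapsto\zeta^a x_1$, $x_2\mapsto \zeta^b x_2$; $S^G_{a,b}$ denotes the ring of invariants. It is spanned by the invariant monomials $x_1^cx_2^d$, i.e. those with $ac+bd\equiv 0 \pmod p$. $\mathrm{inv}_{a,b}$ denotes the minimal set of monomial generators of $S^G_{a,b}$ as a $\mathbb{C}$-algebra: the nonconstant invariant monomials that are not a product of two nonconstant invariant monomials. ''$S^G_{a,b}$ is generated by $k$ invariants'' means $|\mathrm{inv}_{a,b}|=k$. Writing $\mathrm{inv}_{a,b}=\{z_0,\dots,z_n\}$ in lexicographic order with $x_1>x_2$, let $R=\mathbb{C}[y_0,\dots,y_n]$ with $\deg y_i=\deg z_i$ and let $\varphi_{a,b}:R\to S^G_{a,b}$ be the $\mathbb{C}$-algebra map $y_i\mapsto z_i$. For an integer $c$, $c_p$ denotes the unique integer $0\le c_p<p$ with $c\equiv c_p\pmod p$, and for $c$ not divisible by $p$,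 $c^{-1}$ denotes the unique integer $0<c^{-1}<p$ with $cc^{-1}\equiv 1\pmod p$. *)

(* Defs.v *)
From mathcomp Require Import all_boot.
Set Implicit Arguments. Unset Strict Implicit. Unset Printing Implicit Defensive.

(* A monomial x1^c x2^d of C[x1,x2] is encoded by its exponent pair (c, d).
   G = Z/pZ acts by x1 |-> zeta^a x1, x2 |-> zeta^b x2, so x1^c x2^d is
   invariant iff a*c + b*d = 0 (mod p). *)
Definition invariant_mono (p a b : nat) (m : nat * nat) : bool :=
  p %| a * m.1 + b * m.2.

Definition nonconstant_mono (m : nat * nat) : bool := m != (0, 0).

Definition in_inv (p a b : nat) (m : nat * nat) : Prop :=
  [/\ invariant_mono p a b m, nonconstant_mono m &
      ~ exists m1 m2 : nat * nat,
          [/\ invariant_mono p a b m1, nonconstant_mono m1,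
              invariant_mono p a b m2, nonconstant_mono m2 &
              m = (m1.1 + m2.1, m1.2 + m2.2)]].

Definition inv_card (p a b k : nat) : Prop :=
  exists s : seq (nat * nat),
    [/\ uniq s, size s = k & forall m, m \in s <-> in_inv p a b m].

(* c^{-1}: the unique 0 < x < p with c * x = 1 (mod p) (0 if none exists). *)
Definition modinv (p c : nat) : nat :=
  odflt 0 (omap (@nat_of_ord p) [pick x : 'I_p | c * x == 1 %[mod p]]).

Definition resp (p c : nat) : nat := c %% p.

(* Main.v *)
Require Import Defs.
From mathcomp Require Import all_boot zify.

Lemma modinvP p a : prime p -> 0 < a < p ->
  0 < modinv p a < p /\ a * modinv p a = 1 %[mod p].
Proof.
move=> pp /andP [a0 ap]; have p1 := prime_gt1 pp.
rewrite /modinv; case: pickP => [x /eqP Hx | H] /=.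
  split => //; rewrite ltn_ord andbT lt0n; apply/eqP => x0.
  by move: Hx; rewrite x0 muln0 mod0n modn_small.
have [km kn E _] := egcdnP p a0.
have g1 : gcdn a p = 1.
  apply/eqP; rewrite gcdnC -/(coprime p a) prime_coprime //.
  by apply/negP => /(dvdn_leq a0); rewrite leqNgt ap.
have p0 : 0 < p by lia.
have := H (Ordinal (ltn_pmod km p0)); rewrite /= modnMmr mulnC E g1.
by rewrite -modnDml modnMl add0n eqxx.
Qed.

Lemma inv_char p a b : prime p -> 0 < a < p -> 0 < b < p ->
  0 < (modinv p a * b) %% p < p /\
  forall c d, (p %| a*c + b*d) = (c == (p - (modinv p a * b) %% p) * d %[mod p]).
Proof.
move=> pp Ha Hb; have p1 := prime_gt1 pp; have p0 : 0 < p by lia.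
have [/andP [A0 Ap] HA] := modinvP _ _ pp Ha.
set A := modinv p a in A0 Ap HA *; set k := (A * b) %% p.
have nA : ~~ (p %| A) by apply/negP => /(dvdn_leq A0); rewrite leqNgt Ap.
have nb : ~~ (p %| b).
  by apply/negP => /(dvdn_leq (proj1 (andP Hb))); rewrite leqNgt (proj2 (andP Hb)).
have k0 : 0 < k.
  by rewrite lt0n; change (~~ (p %| A*b)); rewrite Euclid_dvdM // negb_or nA nb.
split; first by rewrite k0 ltn_pmod.
move=> c d.
have kp : k <= p by apply: ltnW; rewrite ltn_pmod.
rewrite -(eqn_modDr (k * d)) -mulnDl subnK // modnMr.
have -> : (p %| a * c + b * d) = (p %| A * (a * c + b * d)).
  by rewrite Euclid_dvdM // (negbTE nA).
rewrite /dvdn; congr (_ == 0).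
rewrite mulnDr !mulnA -modnDm -(modnMml (A * a)) -(modnMml (A*b)).
by rewrite mulnC in HA; rewrite HA (modn_small p1) mul1n -/k modnDm.
Qed.

Set Implicit Arguments. Unset Strict Implicit.

Lemma nc_iff c d : nonconstant_mono (c, d) = (0 < c + d).
Proof. by rewrite /nonconstant_mono xpair_eqE; case: c; case: d. Qed.

Lemma inv_sub p a b c1 d1 c2 d2 : invariant_mono p a b (c1, d1) ->
  invariant_mono p a b (c1 + c2, d1 + d2) -> invariant_mono p a b (c2, d2).
Proof.
rewrite /invariant_mono /= => H1.
have -> : a * (c1 + c2) + b * (d1 + d2) = (a * c1 + b * d1) + (a * c2 + b * d2) by rewrite !mulnDr; lia.
by rewrite dvdn_addr.
Qed.

Definition hyps p a b r r' :=
  [/\ prime p, 0 < r < p, 0 < r' < p,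
   forall c d, invariant_mono p a b (c, d) = (c == r * d %[mod p]) &
   forall c d, invariant_mono p a b (c, d) = (d == r' * c %[mod p])].

Lemma L_c0 p a b r r' c : hyps p a b r r' -> invariant_mono p a b (c, 0) -> 0 < c -> p <= c.
Proof.
case=> _ _ _ H1 _; rewrite H1 muln0 => /eqP Hc c0.
by apply: dvdn_leq => //; rewrite /dvdn Hc mod0n.
Qed.

Lemma L_0d p a b r r' d : hyps p a b r r' -> invariant_mono p a b (0, d) -> 0 < d -> p <= d.
Proof.
case=> _ _ _ _ H2; rewrite H2 muln0 => /eqP Hc c0.
by apply: dvdn_leq => //; rewrite /dvdn Hc mod0n.
Qed.

Lemma irr_p0 p a b r r' : hyps p a b r r' -> in_inv p a b (p, 0).
Proof.
move=> h; have [pp _ _ _ _] := h; have p1 := prime_gt1 pp.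
split; first by rewrite /invariant_mono /= muln0 addn0 dvdn_mull.
  by rewrite nc_iff addn0; lia.
case=> [[c1 d1] [[c2 d2] [I1 N1 I2 N2 [E1 E2]]]]; rewrite !nc_iff in N1 N2.
have d10 : d1 = 0 by lia. have d20 : d2 = 0 by lia. subst d1 d2.
have := L_c0 h I1; have := L_c0 h I2; lia.
Qed.

Lemma irr_0p p a b r r' : hyps p a b r r' -> in_inv p a b (0, p).
Proof.
move=> h; have [pp _ _ _ _] := h; have p1 := prime_gt1 pp.
split; first by rewrite /invariant_mono /= muln0 add0n dvdn_mull.
  by rewrite nc_iff add0n; lia.
case=> [[c1 d1] [[c2 d2] [I1 N1 I2 N2 [E1 E2]]]]; rewrite !nc_iff in N1 N2.
have d10 : c1 = 0 by lia. have d20 : c2 = 0 by lia. subst c1 c2.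
have := L_0d h I1; have := L_0d h I2; lia.
Qed.

Lemma irr_r1 p a b r r' : hyps p a b r r' -> in_inv p a b (r, 1).
Proof.
move=> h; have [pp Hr _ H1 _] := h.
split; first by rewrite H1 muln1 eqxx.
  by rewrite nc_iff; lia.
case=> [[c1 d1] [[c2 d2] [I1 N1 I2 N2 [E1 E2]]]]; rewrite !nc_iff in N1 N2.
case: d1 E2 I1 N1 => [|d1] E2 I1 N1.
  have := L_c0 h I1; lia.
have d20 : d2 = 0 by lia. subst d2.
have := L_c0 h I2; lia.
Qed.

Lemma irr_1r p a b r r' : hyps p a b r r' -> in_inv p a b (1, r').
Proof.
move=> h; have [pp _ Hr _ H2] := h.
split; first by rewrite H2 muln1 eqxx.
  by rewrite nc_iff; lia.
case=> [[c1 d1] [[c2 d2] [I1 N1 I2 N2 [E1 E2]]]]; rewrite !nc_iff in N1 N2.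
case: c1 E1 I1 N1 => [|c1] E1 I1 N1.
  have := L_0d h I1; lia.
have d20 : c2 = 0 by lia. subst c2.
have := L_0d h I2; lia.
Qed.

Lemma classify p a b r r' c d : hyps p a b r r' -> in_inv p a b (c, d) ->
  (c, d) \in [:: (p, 0); (r, 1); (1, r'); (0, p)] \/ (0 < c < r /\ 0 < d < r').
Proof.
move=> h [I N D]; have [pp Hr Hr' H1 H2] := h; have p1 := prime_gt1 pp.
rewrite nc_iff in N.
have Hdec : forall c1 d1 c2 d2, invariant_mono p a b (c1, d1) -> 0 < c1 + d1 ->
   0 < c2 + d2 -> c = c1 + c2 -> d = d1 + d2 -> False.
  move=> c1 d1 c2 d2 I1 N1 N2 E1 E2; apply: D.
  exists (c1, d1), (c2, d2); split; rewrite ?nc_iff //=; last by rewrite E1 E2.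
  by apply: (inv_sub I1); rewrite -E1 -E2.
rewrite !inE !xpair_eqE.
case: (leqP r c) => rc.
  case: (posnP d) => d0.
    subst d.
    have pc := L_c0 h I (ltac:(lia) : 0 < c).
    case: (eqVneq c p) => [->|cp]; first by left.
    exfalso; apply: (Hdec p 0 (c - p) 0) => //; try lia.
      by rewrite /invariant_mono /= muln0 addn0 dvdn_mull.
  case: (c =P r) => cr; case: (d =P 1) => d1;
    try (by left; rewrite cr d1 ?eqxx /= ?andbF ?orbT);
    exfalso; apply: (Hdec r 1 (c - r) (d - 1)) => //; try lia;
    by rewrite H1 muln1 eqxx.
case: (posnP c) => c0.
  subst c.
  have pd := L_0d h I N.
  case: (eqVneq d p) => [->|dp]; first by left; rewrite ?eqxx /= ?andbF ?andbT ?orbT.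
  exfalso; apply: (Hdec 0 p 0 (d - p)) => //; try lia.
  by rewrite /invariant_mono /= muln0 add0n dvdn_mull.
case: (leqP r' d) => rd.
  case: (c =P 1) => cr; case: (d =P r') => d1;
    try (by left; rewrite cr d1 ?eqxx /= ?andbF ?orbT);
    exfalso; apply: (Hdec 1 r' (c - 1) (d - r')) => //; try lia;
    by rewrite H2 muln1 eqxx.
right; case: (posnP d) => d0; last by lia.
subst d; have := L_c0 h I (ltac:(lia) : 0 < c); lia.
Qed.

Lemma fifth p a b r r' : hyps p a b r r' -> 1 < r -> exists c0 d0,
  [/\ in_inv p a b (c0, d0), 0 < c0, 1 < d0 & (c0 = 1 -> d0 = r' -> r * r' = p + 1)].
Proof.
move=> h r1; have [pp Hr Hr' H1 H2] := h; have p1 := prime_gt1 pp.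
have Ep := divn_eq p r; set q := p %/ r in Ep; set s := p %% r in Ep.
have sr : s < r by rewrite ltn_pmod //; lia.
have s0 : 0 < s.
  rewrite lt0n; apply/negP => /eqP s0.
  have : r %| p by rewrite /dvdn -/s s0.
  case/primeP: pp => _ /[apply] /orP [] /eqP; lia.
have q1 : 0 < q by case: q Ep => [|q'] Ep; lia.
have Erq : r * (q + 1) = (r - s) + p by nia.
exists (r - s), (q + 1); split; [|lia|lia|by move=> E1 E2; rewrite -E2 Erq E1 addnC].
split; first by rewrite H1 Erq modnDr eqxx.
  by rewrite nc_iff; lia.
case=> [[c1 d1] [[c2 d2] [I1 N1 I2 N2 [E1 E2]]]]; rewrite !nc_iff in N1 N2.
case: (posnP d1) => d10.
  subst d1; have := L_c0 h I1 (ltac:(lia) : 0 < c1); lia.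
case: (posnP d2) => d20.
  subst d2; have := L_c0 h I2 (ltac:(lia) : 0 < c2); lia.
move: I1; rewrite H1 => /eqP I1.
have small : r * d1 < p by nia.
rewrite (modn_small small) in I1.
have := leq_mod c1 p; rewrite I1; nia.
Qed.

Lemma main_comb p a b r r' : hyps p a b r r' -> inv_card p a b 4 <-> r * r' = p + 1.
Proof.
move=> h; have [pp Hr Hr' H1 H2] := h; have p1 := prime_gt1 pp.
split.
  case=> s [Us Ss Hs].
  case: (r * r' =P p + 1) => // Hne; exfalso.
  case: (ltngtP r 1) => r1; first by lia.
    have [c0 [d0 [I0 c0p d0p Hn]]] := fifth h r1.
    have Hn' : ~ (c0 = 1 /\ d0 = r') by case=> E1 E2; apply: Hne; apply: Hn.
    set five := [:: (c0, d0); (p, 0); (r, 1); (1, r'); (0, p)].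
    have U5 : uniq five.
      rewrite /five /= !inE !xpair_eqE; lia.
    have S5 : {subset five <= s}.
      apply/allP; rewrite /five /= !(proj2 (Hs _)) //.
        exact: irr_0p h. exact: irr_1r h. exact: irr_r1 h. exact: irr_p0 h.
    have := uniq_leq_size U5 S5; rewrite Ss /five /=; lia.
  subst r.
  have r'1 : r' = 1.
    case: (irr_1r h) => + _ _; rewrite H1 mul1n => /eqP.
    rewrite !modn_small //; lia.
  subst r'.
  have S3 : {subset s <= [:: (p, 0); (1, 1); (0, p)]}.
    move=> [c d] /Hs /(classify h) [|]; last by lia.
    by rewrite !inE; case/or4P => ->; rewrite ?orbT.
  have := uniq_leq_size Us S3; rewrite Ss /=; lia.
move=> E.
have r1 : 1 < r by nia.
have r'1 : 1 < r' by nia.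
exists [:: (p, 0); (r, 1); (1, r'); (0, p)]; split => //.
  rewrite /= !inE !xpair_eqE; lia.
case=> c d; split.
  rewrite !inE; case/or4P => /eqP [-> ->].
  - exact: irr_p0 h.
  - exact: irr_r1 h.
  - exact: irr_1r h.
  - exact: irr_0p h.
move=> I; case: (classify h I) => // [[/andP [c0 cr] /andP [d0 dr]]].
exfalso; move: I => [+ _ _]; rewrite H2 => /eqP.
rewrite (modn_small (_ : d < p)); last by lia.
move=> Hd; have := divn_eq (r' * c) p; rewrite -Hd.
set k := (r' * c) %/ p => Ek.
case: (posnP k) => k0.
  rewrite k0 mul0n add0n in Ek; nia.
nia.
Qed.

Unset Implicit Arguments.

Theorem theorem1p2 (p a b : nat) :
  prime p -> 0 < a < p -> 0 < b < p ->
  (inv_card p a b 4 <->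
   (p - resp p (modinv p a * b)) * (p - resp p (a * modinv p b)) = p + 1).
Proof.
move=> pp Ha Hb.
have [/andP [k0 kp] Hk] := inv_char _ _ _ pp Ha Hb.
have [/andP [k0' kp'] Hk'] := inv_char _ _ _ pp Hb Ha.
rewrite /resp [a * _]mulnC.
apply: main_comb; split => //; try lia.
by move=> c d; rewrite /invariant_mono /= addnC Hk'.
Qed.
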